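(* Let $T:X\rightrightarrows X^*$ be a multivalued operator such that $T+\alpha^*$ is pre-maximal pseudomonotone for every $\alpha^*\in X^*$. Then $T$ is pre-maximal monotone and $T^\mu$ is pre-maximal pseudomonotone.
   Context: $X$ is a real Banach space with dual $X^*$ and pairing $\langle x,x^*\rangle=x^*(x)$. A multivalued operator $T:X\rightrightarrows X^*$ is identified with its graph $T\subset X\times X^*$; $T+\alpha^*$ denotes the operator $x\mapsto T(x)+\alpha^*=\{x^*+\alpha^*:x^*\in T(x)\}$. The monotone polar is $T^\mu=\{(x,x^* ): \langle x-y,x^*-y^*\rangle\ge0\ \forall (y,y^* )\in T\}$; $T$ is monotone if $\langle x-y,x^*-y^*\rangle\ge0$ for all $(x,x^* ),(y,y^* )\in T$; $T$ is pre-maximal monotone if both $T$ and $T^\mu$ are monotone. For $(x,x^* ),(y,y^* )\in X\times X^*$, write $(x,x^* )\sim_p(y,y^* )$ if either $\min\{\langle x-y,y^*\rangle,\langle y-x,x^*\rangle\}<0$ or $\langle x-y,y^*\rangle=\langle y-x,x^*\rangle=0$; the pseudomonotone polar is $T^\rho=\{(x,x^* ): (x,x^* )\sim_p(y,y^* )\ \forall (y,y^* )\in T\}$. $T$ is pseudomonotone if for all $(x,x^* ),(y,y^* )\in T$, $\langle y-x,x^*\rangle\ge0$ implies $\langle y-x,y^*\rangle\ge0$; $T$ is pre-maximal pseudomonotone if both $T$ and $T^\rho$ are pseudomonotone. *)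

(* Defs.v *)
From Stdlib Require Import Reals.
Open Scope R_scope.

Record BanachSpace := {
  bcar :> Type;
  bzero : bcar;
  badd : bcar -> bcar -> bcar;
  bopp : bcar -> bcar;
  bscal : R -> bcar -> bcar;
  bnorm : bcar -> R;
  badd_assoc : forall x y z, badd x (badd y z) = badd (badd x y) z;
  badd_comm : forall x y, badd x y = badd y x;
  badd_0 : forall x, badd x bzero = x;
  badd_opp : forall x, badd x (bopp x) = bzero;
  bscal_assoc : forall a b x, bscal a (bscal b x) = bscal (a * b) x;
  bscal_1 : forall x, bscal 1 x = x;
  bscal_distr_l : forall a x y, bscal a (badd x y) = badd (bscal a x) (bscal a y);
  bscal_distr_r : forall a b x, bscal (a + b) x = badd (bscal a x) (bscal b x);
  bnorm_eq0 : forall x, bnorm x = 0 -> x = bzero;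
  bnorm_scal : forall a x, bnorm (bscal a x) = Rabs a * bnorm x;
  bnorm_triangle : forall x y, bnorm (badd x y) <= bnorm x + bnorm y;
  bcomplete : forall u : nat -> bcar,
    (forall eps, 0 < eps -> exists N, forall m n, (N <= m)%nat -> (N <= n)%nat ->
        bnorm (badd (u m) (bopp (u n))) < eps) ->
    exists l, forall eps, 0 < eps -> exists N, forall n, (N <= n)%nat ->
        bnorm (badd (u n) (bopp l)) < eps
}.

Definition bsub {X : BanachSpace} (x y : X) : X := badd X x (bopp X y).

Record dual (X : BanachSpace) := {
  dfun :> X -> R;
  dfun_add : forall x y, dfun (badd X x y) = dfun x + dfun y;
  dfun_scal : forall a x, dfun (bscal X a x) = a * dfun x;
  dfun_bounded : exists M, forall x, Rabs (dfun x) <= M * bnorm X x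
}.

Definition pairing {X : BanachSpace} (x : X) (xs : dual X) : R := dfun X xs x.

(* A multivalued operator T : X => dual X, identified with its graph. *)
Definition operator (X : BanachSpace) := X -> dual X -> Prop.

Definition shift_op {X : BanachSpace} (T : operator X) (a : dual X) : operator X :=
  fun x zs => exists xs, T x xs /\ forall v : X, dfun X zs v = dfun X xs v + dfun X a v.

(* <x - y, xs - ys> written out via linearity *)
Definition mono_pair {X : BanachSpace} (x : X) (xs : dual X) (y : X) (ys : dual X) : R :=
  pairing (bsub x y) xs - pairing (bsub x y) ys.

Definition monotone {X : BanachSpace} (T : operator X) : Prop :=
  forall x xs y ys, T x xs -> T y ys -> 0 <= mono_pair x xs y ys.

Definition mono_polar {X : BanachSpace} (T : operator X) : operator X :=
  fun x xs => forall y ys, T y ys -> 0 <= mono_pair x xs y ys.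

Definition pre_maximal_monotone {X : BanachSpace} (T : operator X) : Prop :=
  monotone T /\ monotone (mono_polar T).

Definition pseudo_rel {X : BanachSpace} (x : X) (xs : dual X) (y : X) (ys : dual X) : Prop :=
  Rmin (pairing (bsub x y) ys) (pairing (bsub y x) xs) < 0 \/
  (pairing (bsub x y) ys = 0 /\ pairing (bsub y x) xs = 0).

Definition pseudo_polar {X : BanachSpace} (T : operator X) : operator X :=
  fun x xs => forall y ys, T y ys -> pseudo_rel x xs y ys.

Definition pseudomonotone {X : BanachSpace} (T : operator X) : Prop :=
  forall x xs y ys, T x xs -> T y ys ->
    0 <= pairing (bsub y x) xs -> 0 <= pairing (bsub y x) ys.

Definition pre_maximal_pseudomonotone {X : BanachSpace} (T : operator X) : Prop :=
  pseudomonotone T /\ pseudomonotone (pseudo_polar T).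

(* Main.v *)
Require Import Defs.
From Stdlib Require Import Reals Lra.
Open Scope R_scope.

Lemma dzero_at {X : BanachSpace} (f : dual X) : dfun X f (bzero X) = 0.
Proof.
  pose proof (dfun_add X f (bzero X) (bzero X)) as H.
  rewrite badd_0 in H. lra.
Qed.

Lemma dopp_at {X : BanachSpace} (f : dual X) x : dfun X f (bopp X x) = - dfun X f x.
Proof.
  pose proof (dfun_add X f x (bopp X x)) as H.
  rewrite badd_opp, dzero_at in H. lra.
Qed.

Lemma dsub_at {X : BanachSpace} (f : dual X) x y :
  dfun X f (bsub x y) = dfun X f x - dfun X f y.
Proof. unfold bsub. rewrite dfun_add, dopp_at. ring. Qed.

Definition dzero (X : BanachSpace) : dual X.
Proof.
  refine {| dfun := fun _ => 0 |}.
  - intros; ring.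
  - intros; ring.
  - exists 0. intros. rewrite Rabs_R0. lra.
Defined.

Definition dsub (X : BanachSpace) (f g : dual X) : dual X.
Proof.
  refine {| dfun := fun v => dfun X f v - dfun X g v |}.
  - intros. rewrite !dfun_add. ring.
  - intros. rewrite !dfun_scal. ring.
  - destruct (dfun_bounded X f) as [Mf Hf].
    destruct (dfun_bounded X g) as [Mg Hg].
    exists (Mf + Mg). intros v.
    eapply Rle_trans. { unfold Rminus. apply Rabs_triang. }
    rewrite Rabs_Ropp. specialize (Hf v). specialize (Hg v). lra.
Defined.

Lemma mono_to_pseudo {X : BanachSpace} (T : operator X) (a : dual X) x xs u :
  mono_polar T x xs -> (forall v, dfun X u v = dfun X xs v + dfun X a v) ->
  pseudo_polar (shift_op T a) x u.
Proof.
  intros Hm Hu y v [ys [Ty Hv]].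
  specialize (Hm y ys Ty). unfold mono_pair, pseudo_rel, pairing in *.
  rewrite !dsub_at in *. rewrite !Hv, !Hu.
  set (A := dfun X ys x + dfun X a x - (dfun X ys y + dfun X a y)).
  set (B := dfun X xs y + dfun X a y - (dfun X xs x + dfun X a x)).
  assert (A + B <= 0) by (unfold A, B; lra).
  destruct (Rlt_dec A 0).
  - left. eapply Rle_lt_trans; [apply Rmin_l|]. lra.
  - destruct (Rlt_dec B 0).
    + left. eapply Rle_lt_trans; [apply Rmin_r|]. lra.
    + right. lra.
Qed.

Theorem mainTheorem12 (X : BanachSpace) (T : operator X) :
  (forall a : dual X, pre_maximal_pseudomonotone (shift_op T a)) ->
  pre_maximal_monotone T /\ pre_maximal_pseudomonotone (mono_polar T).
Proof.
  intros H.
  assert (Hmon : monotone T).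
  { intros x xs y ys Tx Ty.
    pose proof (proj1 (H (dsub X (dzero X) xs)) x (dzero X) y (dsub X ys xs)) as P.
    assert (0 <= pairing (bsub y x) (dsub X ys xs)) as Q.
    { apply P.
      - exists xs. split; [exact Tx|]. intros v; simpl; ring.
      - exists ys. split; [exact Ty|]. intros v; simpl; ring.
      - unfold pairing; simpl; lra. }
    unfold mono_pair, pairing in *. simpl in Q. rewrite !dsub_at in *. lra. }
  assert (Hmon2 : monotone (mono_polar T)).
  { intros x xs y ys Tx Ty.
    pose proof (proj2 (H (dsub X (dzero X) xs)) x (dzero X) y (dsub X ys xs)) as P.
    assert (0 <= pairing (bsub y x) (dsub X ys xs)) as Q.
    { apply P.
      - apply (mono_to_pseudo T _ x xs); auto. intros v; simpl; ring.
      - apply (mono_to_pseudo T _ y ys); auto. intros v; simpl; ring.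
      - unfold pairing; simpl; lra. }
    unfold mono_pair, pairing in *. simpl in Q. rewrite !dsub_at in *. lra. }
  split; [split; assumption|]. split.
  - intros x xs y ys Hx Hy C.
    specialize (Hmon2 x xs y ys Hx Hy).
    unfold mono_pair, pairing in *. rewrite !dsub_at in *. lra.
  - intros x xs y ys Hx Hy C.
    apply (proj2 (H (dzero X)) x xs y ys); auto.
    + intros z zs [zs' [Tz Hv]].
      assert (Mz : mono_polar T z zs') by (intros w ws Tw; apply Hmon; auto).
      specialize (Hx z zs' Mz). unfold pseudo_rel, pairing in *.
      rewrite !Hv. simpl. rewrite !Rplus_0_r. exact Hx.
    + intros z zs [zs' [Tz Hv]].
      assert (Mz : mono_polar T z zs') by (intros w ws Tw; apply Hmon; auto).
      specialize (Hy z zs' Mz). unfold pseudo_rel, pairing in *.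
      rewrite !Hv. simpl. rewrite !Rplus_0_r. exact Hy.
Qed.
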